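(* The function $a\mapsto\lambda_c(a):=\|\mathbf T_{\kappa^{(a)}}\|^{-1}$ is non-increasing on $(0,\infty)$.
   Context: Fix $\tau\in(2,3)$, $\alpha=1/(\tau-1)$, constants $c_{\mathrm F},\mu>0$. For $a>0$ let $\Lambda_a(dx)=dx/a$ be normalized Lebesgue measure on $(0,a]$, $\kappa^{(a)}(u,v)=a\big[1-e^{-c_{\mathrm F}^2(uv)^{-\alpha}/\mu}\big]$ for $u,v\in(0,a]$, and $\mathbf T_{\kappa^{(a)}}$ the integral operator on $L^2((0,a],\Lambda_a)$ given by $(\mathbf T_{\kappa^{(a)}}f)(u)=\int_0^a\kappa^{(a)}(u,v)f(v)\Lambda_a(dv)$; $\|\cdot\|$ is the operator norm. *)

(* Defs.v *)
From mathcomp Require Import all_boot all_order all_algebra.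
From mathcomp Require Import all_classical all_reals all_analysis.
Set Implicit Arguments. Unset Strict Implicit. Unset Printing Implicit Defensive.
Import Order.TTheory GRing.Theory Num.Theory.
Local Open Scope classical_set_scope.
Local Open Scope ring_scope.

Section Defs.
Variable R : realType.

Definition alpha (tau : R) : R := (tau - 1)^-1.

Definition kappa (tau cF mu a : R) (u v : R) : R :=
  a * (1 - expR (- (cF ^+ 2 * (u * v) `^ (- alpha tau) / mu))).

(* integral against Lambda_a(dx) = dx/a on (0,a] *)
Definition Lam_int (a : R) (g : R -> \bar R) : \bar R :=
  ((a^-1)%:E * \int[lebesgue_measure]_(x in `]0%R, a%R]%classic) g x)%E.

Definition L2norm (a : R) (f : R -> R) : \bar R :=
  ((Lam_int a (fun x => (f x ^+ 2)%:E)) `^ (2^-1))%E.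

Definition Top (tau cF mu a : R) (f : R -> R) : R -> R :=
  fun u => a^-1 * Rintegral lebesgue_measure `]0, a] (fun v => kappa tau cF mu a u v * f v).

Definition unit_ball (a : R) : set (R -> R) :=
  [set f | measurable_fun `]0, a] f /\ (L2norm a f <= 1)%E].

Definition opnorm (tau cF mu a : R) : \bar R :=
  ereal_sup [set L2norm a (Top tau cF mu a f) | f in unit_ball a].

Definition lambda_c (tau cF mu a : R) : R := (fine (opnorm tau cF mu a))^-1.

End Defs.

(* Main.v *)
Require Import Defs.
From mathcomp Require Import all_boot all_order all_algebra.
From mathcomp Require Import all_classical all_reals all_analysis.
From mathcomp Require Import ring lra measurable_realfun.
Import Order.TTheory GRing.Theory Num.Theory.
Local Open Scope ring_scope.

Section generic.
Import HBNNSimple.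
Context d (T : measurableType d) (R : realType) (mu : {measure set T -> \bar R}).
Local Open Scope ereal_scope.

Lemma ge0_le_integral_nm (D : set T) (f1 f2 : T -> \bar R) :
  (forall x, D x -> 0 <= f1 x) -> (forall x, D x -> f1 x <= f2 x) ->
  \int[mu]_(x in D) f1 x <= \int[mu]_(x in D) f2 x.
Proof.
move=> f10 f12.
have f20 : forall x, D x -> 0 <= f2 x.
  by move=> x Dx; exact: le_trans (f10 x Dx) (f12 x Dx).
rewrite (ge0_integralE mu f10) (ge0_integralE mu f20) /=.
apply: ereal_sup_le => _ [h /= hf <-]; exists h => //= x.
apply: (le_trans (hf x)); rewrite /patch; case: ifPn => // /set_mem Dx; exact: f12.
Qed.

Lemma ge0_integralZl_aux (D : set T) (f : T -> \bar R) (c : R) : (0 < c)%R ->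
  (forall x, D x -> 0 <= f x) ->
  c%:E * \int[mu]_(x in D) f x <= \int[mu]_(x in D) (c%:E * f x).
Proof.
move=> c0 f0.
have cf0 : forall x, D x -> 0 <= c%:E * f x.
  by move=> x Dx; apply: mule_ge0; [rewrite lee_fin ltW | exact: f0].
rewrite (ge0_integralE mu f0) (ge0_integralE mu cf0) /= -ereal_sup_pZl //.
apply: ereal_sup_le => _ [_ [h /= hf <-] <-].
exists (scale_nnsfun h (ltW c0)) => /=.
  move=> x; have := hf x; rewrite /patch; case: ifPn => Dx hx.
    by rewrite EFinM; apply: lee_wpmul2l => //; rewrite lee_fin ltW.
  have h0 : (0 <= h x)%R by apply: fun_ge0.
  have hx0 : h x = 0%R by apply/eqP; rewrite eq_le h0 andbT -lee_fin.
  by rewrite /= hx0 mulr0.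
by rewrite sintegralrM.
Qed.

Lemma ge0_integralZl_nm (D : set T) (f : T -> \bar R) (c : R) : (0 < c)%R ->
  (forall x, D x -> 0 <= f x) ->
  \int[mu]_(x in D) (c%:E * f x) = c%:E * \int[mu]_(x in D) f x.
Proof.
move=> c0 f0; apply/eqP; rewrite eq_le; apply/andP; split; last first.
  exact: ge0_integralZl_aux.
have cf0 : forall x, D x -> 0 <= c%:E * f x.
  by move=> x Dx; apply: mule_ge0; [rewrite lee_fin ltW | exact: f0].
have := @ge0_integralZl_aux D (fun x => c%:E * f x) c^-1 ltac:(by rewrite invr_gt0) cf0.
have -> : \int[mu]_(x in D) (c^-1%:E * (c%:E * f x)) = \int[mu]_(x in D) f x.
  by apply: eq_integral => x _; rewrite muleA -EFinM mulVf ?gt_eqF// mul1e.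
move=> H.
rewrite -(@lee_pmul2l _ (c^-1)%:E) ?lte_fin ?invr_gt0 //.
by rewrite muleA -EFinM mulVf ?gt_eqF// mul1e.
Qed.

End generic.

Section kap.
Context (R : realType) (tau cF mu : R).
Hypothesis tau1 : 1 < tau.
Hypothesis cF0 : 0 < cF.
Hypothesis mu0 : 0 < mu.

Let X (u v : R) := cF ^+ 2 * (u * v) `^ (- alpha tau) / mu.

Lemma X_ge0 u v : 0 <= X u v.
Proof using tau1 cF0 mu0.
rewrite /X; apply: mulr_ge0; last by rewrite invr_ge0 ltW.
by apply: mulr_ge0; [exact: sqr_ge0 | exact: powR_ge0].
Qed.

Lemma kappa_ge0 a u v : 0 < a -> 0 <= kappa tau cF mu a u v.
Proof using tau1 cF0 mu0.
move=> a0; rewrite /kappa; apply: mulr_ge0; first exact: ltW.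
rewrite subr_ge0 expR_le1 oppr_le0; exact: X_ge0.
Qed.

Lemma kappa_le a u v : 0 < a -> kappa tau cF mu a u v <= a.
Proof using tau1 cF0 mu0.
move=> a0; rewrite /kappa; apply: (@le_trans _ _ (a * 1)); last by rewrite mulr1.
apply: ler_wpM2l; first exact: ltW.
by rewrite gerBl expR_ge0.
Qed.

Definition mlow (a : R) := 1 - expR (- (cF ^+ 2 * (a * a) `^ (- alpha tau) / mu)).

Lemma mlow_gt0 a : 0 < a -> 0 < mlow a.
Proof using tau1 cF0 mu0.
move=> a0; rewrite /mlow subr_gt0 expR_lt1 oppr_lt0.
apply: mulr_gt0; last by rewrite invr_gt0.
by apply: mulr_gt0; [exact: exprn_gt0 | exact: powR_gt0 (mulr_gt0 a0 a0)].
Qed.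

Lemma kappa_low a u v : 0 < a -> 0 < u <= a -> 0 < v <= a ->
  a * mlow a <= kappa tau cF mu a u v.
Proof using tau1 cF0 mu0.
move=> a0 /andP[u0 ua] /andP[v0 va].
rewrite /kappa /mlow; apply: ler_wpM2l; first exact: ltW.
rewrite lerD2l lerN2 ler_expR lerN2.
rewrite ler_pM2r ?invr_gt0// ler_pM2l ?exprn_gt0// !powRN.
have al0 : 0 <= alpha tau by rewrite /alpha invr_ge0 subr_ge0 ltW.
rewrite lef_pV2 ?posrE ?powR_gt0 ?mulr_gt0 //.
have uva : u * v <= a * a by apply: ler_pM => //; apply: ltW.
have uv0 : 0 <= u * v by apply: mulr_ge0; apply: ltW.
have aa0 : 0 <= a * a by apply: mulr_ge0; apply: ltW.
exact: (ge0_ler_powR al0 uv0 aa0 uva).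
Qed.

End kap.

Section basics.
Context (R : realType).
Local Notation itv a := (`]0%R, a%R]%classic : set R).
Local Notation leb := (@lebesgue_measure R).

Lemma mitv (a : R) : measurable (itv a).
Proof. exact: measurable_itv. Qed.

Lemma itvP (a x : R) : itv a x <-> 0 < x <= a.
Proof. by rewrite /= in_itv /=. Qed.

Lemma leb_itv (a : R) : 0 < a -> leb (itv a) = a%:E.
Proof. by move=> a0; rewrite lebesgue_measure_itv /= lte_fin a0 -EFinB subr0. Qed.

Lemma int_cst_itv (a r : R) : 0 < a ->
  (\int[leb]_(x in itv a) r%:E = (r * a)%:E)%E.
Proof.
move=> a0; rewrite integral_cst /=; last exact: measurable_itv.
by rewrite lebesgue_measure_itv /= lte_fin a0 -EFinB subr0 -EFinM.
Qed.

Lemma absle (x : R) : `|x| <= 1 + x ^+ 2.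
Proof.
have h := sqr_ge0 (`|x| - 1).
have e : `|x| ^+ 2 = x ^+ 2 by rewrite real_normK ?num_real.
have n0 := normr_ge0 x.
nra.
Qed.

Lemma sub_integral_nm (A B : set R) (f : R -> \bar R) : (A `<=` B)%classic ->
  (forall x, B x -> (0 <= f x)%E) ->
  (\int[leb]_(x in A) f x <= \int[leb]_(x in B) f x)%E.
Proof.
move=> AB f0; rewrite integral_mkcond [X in (_ <= X)%E]integral_mkcond.
apply: ge0_le_integral_nm => x _; rewrite /patch.
  by case: ifPn => // /set_mem /AB /f0.
case: ifPn => [/set_mem Ax|_]; first by rewrite ifT //; apply/mem_set/AB.
by case: ifPn => // /set_mem /f0.
Qed.

End basics.

Section top.
Context (R : realType) (tau cF mu : R).
Hypothesis tau1 : 1 < tau.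
Hypothesis cF0 : 0 < cF.
Hypothesis mu0 : 0 < mu.
Local Notation itv a := (`]0%R, a%R]%classic : set R).
Local Notation leb := (@lebesgue_measure R).
Local Notation kap := (kappa tau cF mu).

Let kge0 := @kappa_ge0 R tau cF mu tau1 cF0 mu0.
Let kle := @kappa_le R tau cF mu tau1 cF0 mu0.

Lemma int_kf_le (a : R) (f : R -> R) (u : R) : 0 < a -> measurable_fun (itv a) f ->
  (\int[leb]_(x in itv a) (kap a u x * `|f x|)%:E <=
    (a * a)%:E + a%:E * \int[leb]_(x in itv a) (f x ^+ 2)%:E)%E.
Proof.
move=> a0 mf.
have J0 : (0 <= \int[leb]_(x in itv a) (f x ^+ 2)%:E)%E.
  by apply: integral_ge0 => x _; rewrite lee_fin sqr_ge0.
apply: (@le_trans _ _ (\int[leb]_(x in itv a) (a%:E * (1%:E + (f x ^+ 2)%:E)))%E).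
  apply: ge0_le_integral_nm => x _.
    by rewrite lee_fin; apply: mulr_ge0; [exact: kge0 | exact: normr_ge0].
  rewrite -EFinD -EFinM lee_fin.
  apply: (@le_trans _ _ (a * `|f x|)).
    by apply: ler_wpM2r; [exact: normr_ge0 | exact: kle].
  by apply: ler_wpM2l; [exact: ltW | exact: absle].
have p0 : forall x, itv a x -> (0 <= 1%:E + (f x ^+ 2)%:E)%E.
  by move=> x _; rewrite -EFinD lee_fin addr_ge0 // sqr_ge0.
rewrite ge0_integralZl_nm //.
rewrite ge0_integralD //; last 2 first.
- by move=> x _; rewrite lee_fin sqr_ge0.
- by apply/measurable_EFinP; exact: measurable_funX.
rewrite int_cst_itv // mul1r ge0_muleDr -?EFinM //.
by rewrite lee_fin ltW.
Qed.


Lemma inI (y : \bar R) : (0 <= y)%E -> y \in `[0%E, +oo%E]%R.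
Proof. by move=> y0; rewrite in_itv /= y0 leey. Qed.

Lemma ball_J (a : R) (f : R -> R) : 0 < a -> unit_ball a f ->
  (\int[leb]_(x in itv a) (f x ^+ 2)%:E <= a%:E)%E.
Proof.
move=> a0 [mf Hn].
set J := (\int[leb]_(x in itv a) (f x ^+ 2)%:E)%E.
have J0 : (0 <= J)%E by apply: integral_ge0 => x _; rewrite lee_fin sqr_ge0.
set y := ((a^-1)%:E * J)%E.
have y0 : (0 <= y)%E by apply: mule_ge0 => //; rewrite lee_fin invr_ge0 ltW.
have y1 : (y <= 1)%E.
  have e : y = poweR (poweR y (2^-1)) 2.
    by rewrite -poweRrM mulVf // poweRe1.
  rewrite e -(poweR1r 2).
  apply: (gt0_ler_poweR (r:=2)) => //; first exact/inI/poweR_ge0.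
  exact/inI.
have -> : J = (a%:E * y)%E.
  by rewrite /y muleA -EFinM mulfV ?gt_eqF // mul1e.
rewrite -[leRHS]mule1; apply: lee_wpmul2l => //.
by rewrite lee_fin ltW.
Qed.

Lemma Top_abs (a : R) (f : R -> R) (u : R) : 0 < a -> unit_ball a f ->
  (\int[leb]_(x in itv a) (kap a u x * `|f x|)%:E)%E \is a fin_num /\
  `|Top tau cF mu a f u| <= a^-1 * fine (\int[leb]_(x in itv a) (kap a u x * `|f x|)%:E)%E.
Proof.
move=> a0 uf; have [mf _] := uf; have J := ball_J a f a0 uf.
set F := (\int[leb]_(x in itv a) (kap a u x * `|f x|)%:E)%E.
have F0 : (0 <= F)%E.
  by apply: integral_ge0 => x _; rewrite lee_fin; apply: mulr_ge0; [exact: kge0|exact: normr_ge0].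
set J' := (\int[leb]_(x in itv a) (f x ^+ 2)%:E)%E in J.
have J'0 : (0 <= J')%E by apply: integral_ge0 => x _; rewrite lee_fin sqr_ge0.
have J'fin : J' \is a fin_num by rewrite ge0_fin_numE // (le_lt_trans J) // ltry.
have Ffin : F \is a fin_num.
  rewrite ge0_fin_numE //; apply: (le_lt_trans (int_kf_le a f u a0 mf)).
  by rewrite -/J' -(fineK J'fin) -EFinM -EFinD ltry.
split => //.
rewrite /Top /Rintegral /= integralE.
set h := (fun x => (kap a u x * f x)%:E).
have hle : forall x, (funepos h x <= (kap a u x * `|f x|)%:E)%E /\
                     (funeneg h x <= (kap a u x * `|f x|)%:E)%E.
  move=> x; have := congr1 (fun F => F x) (fune_abse h) => /= e.
  have -> : ((kap a u x * `|f x|)%:E = funepos h x + funeneg h x)%E.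
    by rewrite -e normrM (ger0_norm (kge0 a u x a0)).
  split; [exact: leeDl (funeneg_ge0 h x) | ].
  by rewrite addeC; exact: leeDl (funepos_ge0 h x).
set P := (\int[leb]_(x in itv a) funepos h x)%E.
set N := (\int[leb]_(x in itv a) funeneg h x)%E.
have P0 : (0 <= P)%E by apply: integral_ge0 => x _; exact: funepos_ge0.
have N0 : (0 <= N)%E by apply: integral_ge0 => x _; exact: funeneg_ge0.
have PF : (P <= F)%E.
  apply: ge0_le_integral_nm => x _; [exact: funepos_ge0 | exact: (hle x).1].
have NF : (N <= F)%E.
  apply: ge0_le_integral_nm => x _; [exact: funeneg_ge0 | exact: (hle x).2].
have Pfin : P \is a fin_num by rewrite ge0_fin_numE // (le_lt_trans PF) // -ge0_fin_numE.
have Nfin : N \is a fin_num by rewrite ge0_fin_numE // (le_lt_trans NF) // -ge0_fin_numE.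
move: P0 N0 PF NF; rewrite -(fineK Pfin) -(fineK Nfin) -(fineK Ffin) !lee_fin => P0 N0 PF NF.
have ai : 0 <= a^-1 by rewrite invr_ge0 ltW.
rewrite -EFinB /= normrM (ger0_norm ai).
apply: ler_wpM2l => //.
rewrite ler_norml; apply/andP; split; lra.
Qed.

End top.

Section cmp.
Context (R : realType) (tau cF mu : R).
Hypothesis tau1 : 1 < tau.
Hypothesis cF0 : 0 < cF.
Hypothesis mu0 : 0 < mu.
Local Notation itv a := (`]0%R, a%R]%classic : set R).
Local Notation leb := (@lebesgue_measure R).
Local Notation kap := (kappa tau cF mu).

Let kge0 := @kappa_ge0 R tau cF mu tau1 cF0 mu0.

Lemma int_restr (a b : R) (h1 h2 : R -> \bar R) : (itv a `<=` itv b)%classic ->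
  (forall x, itv a x -> h1 x = h2 x) -> (forall x, itv b x -> ~ itv a x -> h1 x = 0%E) ->
  (\int[leb]_(x in itv b) h1 x = \int[leb]_(x in itv a) h2 x)%E.
Proof.
move=> ab e1 e0; rewrite integral_mkcond [RHS]integral_mkcond.
apply: eq_integral => x _; rewrite /patch.
case: (boolP (x \in itv a)) => [xa|xa].
  by rewrite ifT; [apply: e1; exact: set_mem | apply/mem_set/ab/set_mem].
case: ifPn => [/set_mem xb|_] //.
rewrite e0 //; move/mem_set; by rewrite (negbTE xa).
Qed.

Lemma main_cmp (a b : R) (f : R -> R) : 0 < a -> a <= b -> unit_ball a f ->
  exists2 g, unit_ball b g &
    (L2norm a (Top tau cF mu a f) <= L2norm b (Top tau cF mu b g))%E.
Proof using tau1 cF0 mu0.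
move=> a0 ab uf; have [mf nf] := uf.
have b0 : 0 < b by exact: lt_le_trans ab.
set s := Num.sqrt (b / a).
have ba0 : 0 <= b / a by apply: divr_ge0; apply: ltW.
have s2 : s ^+ 2 = b / a by exact: sqr_sqrtr.
have s0 : 0 < s by rewrite sqrtr_gt0 divr_gt0.
have itvab : (itv a `<=` itv b)%classic.
  move=> x; rewrite /= !in_itv /= => /andP[x0 xa].
  by rewrite x0 /= (le_trans xa ab).
pose g := fun v => if v \in itv a then s * `|f v| else 0.
have gin : forall x, itv a x -> g x = s * `|f x|.
  by move=> x xa; rewrite /g ifT //; apply/mem_set.
have gout : forall x, ~ itv a x -> g x = 0.
  by move=> x xa; rewrite /g ifF //; apply/negbTE/negP => /set_mem.
exists g.
  split.
    have mh : measurable_fun (itv a) (fun v => s * `|f v|).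
      exact: (measurable_funM (measurable_cst s) (measurableT_comp (@normr_measurable R setT) mf)).
    have := (measurable_restrict (fun v => s * `|f v|) (mitv R a) (mitv R b)).1.
    rewrite setIidr // => /(_ mh); exact.
  rewrite /L2norm /Lam_int.
  have -> : (\int[leb]_(x in itv b) (g x ^+ 2)%:E =
            \int[leb]_(x in itv a) ((s ^+ 2)%:E * (f x ^+ 2)%:E))%E.
    apply: int_restr => //.
      by move=> x xa; rewrite gin // -EFinM exprMn real_normK ?num_real.
    by move=> x _ xa; rewrite gout // expr0n.
  rewrite ge0_integralZl_nm ?exprn_gt0 //; last by move=> x _; rewrite lee_fin sqr_ge0.
  rewrite muleA -EFinM s2.
  have -> : b^-1 * (b / a) = a^-1 by rewrite mulrA mulVf ?gt_eqF // mul1r.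
  exact: nf.
have key : forall u, itv a u ->
    s * `|Top tau cF mu a f u| <= Top tau cF mu b g u.
  move=> u ua.
  have [Ffin Hle] := @Top_abs R tau cF mu tau1 cF0 mu0 a f u a0 uf.
  rewrite [X in _ <= X]/Top /Rintegral /=.
  have eqI : (\int[leb]_(x in itv b) (kap b u x * g x)%:E =
      \int[leb]_(x in itv a) ((b / a * s)%:E * (kap a u x * `|f x|)%:E))%E.
    apply: int_restr => //.
      move=> x xa; rewrite gin // -EFinM /kappa; congr (_%:E).
      by field; rewrite gt_eqF.
    by move=> x _ xa; rewrite gout // mulr0.
  rewrite eqI ge0_integralZl_nm; first last.
  - by move=> x _; rewrite lee_fin; apply: mulr_ge0; [exact: kge0|exact: normr_ge0].
  - by rewrite mulr_gt0 // divr_gt0.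
  rewrite -(fineK Ffin) -EFinM /=.
  have -> : b^-1 * (b / a * s * fine (\int[leb]_(x in itv a) (kap a u x * `|f x|)%:E)%E)
      = s * (a^-1 * fine (\int[leb]_(x in itv a) (kap a u x * `|f x|)%:E)%E).
    by field; rewrite !gt_eqF.
  by apply: ler_wpM2l => //; exact: ltW.
rewrite /L2norm /Lam_int.
apply: gt0_ler_poweR => //.
- apply: inI; apply: mule_ge0; first by rewrite lee_fin invr_ge0 ltW.
  by apply: integral_ge0 => x _; rewrite lee_fin sqr_ge0.
- apply: inI; apply: mule_ge0; first by rewrite lee_fin invr_ge0 ltW.
  by apply: integral_ge0 => x _; rewrite lee_fin sqr_ge0.
set Tf := Top tau cF mu a f; set Tg := Top tau cF mu b g.
have step : (\int[leb]_(x in itv a) ((s ^+ 2)%:E * (Tf x ^+ 2)%:E) <=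
             \int[leb]_(x in itv b) (Tg x ^+ 2)%:E)%E.
  apply: (le_trans _ (@sub_integral_nm R _ _ _ itvab _)); last first.
    by move=> x _; rewrite lee_fin sqr_ge0.
  apply: ge0_le_integral_nm => x xa.
    by rewrite -EFinM lee_fin mulr_ge0 // sqr_ge0.
  rewrite -EFinM lee_fin.
  have h := key x xa; rewrite -/Tf -/Tg in h; have n := normr_ge0 (Tf x).
  have e : `|Tf x| ^+ 2 = Tf x ^+ 2 by rewrite real_normK ?num_real.
  have s0' := ltW s0.
  have q := mulr_ge0 s0' n. nra.
apply: (le_trans _ (lee_wpmul2l _ step)); last by rewrite lee_fin invr_ge0 ltW.
rewrite ge0_integralZl_nm ?exprn_gt0 //; last by move=> x _; rewrite lee_fin sqr_ge0.
rewrite muleA -EFinM s2.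
have -> : b^-1 * (b / a) = a^-1 by rewrite mulrA mulVf ?gt_eqF // mul1r.
by [].
Qed.

End cmp.

Section pos.
Context (R : realType) (tau cF mu : R).
Hypothesis tau1 : 1 < tau.
Hypothesis cF0 : 0 < cF.
Hypothesis mu0 : 0 < mu.
Local Notation itv a := (`]0%R, a%R]%classic : set R).
Local Notation leb := (@lebesgue_measure R).
Local Notation kap := (kappa tau cF mu).

Let kge0 := @kappa_ge0 R tau cF mu tau1 cF0 mu0.
Let kle := @kappa_le R tau cF mu tau1 cF0 mu0.
Let klow := @kappa_low R tau cF mu tau1 cF0 mu0.
Let mlow0 := @mlow_gt0 R tau cF mu tau1 cF0 mu0.

Lemma ball_one (a : R) : 0 < a -> unit_ball a (fun _ => 1).
Proof.
move=> a0; split; first exact: measurable_cst.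
rewrite /L2norm /Lam_int expr1n int_cst_itv // mul1r -EFinM mulVf ?gt_eqF //.
by rewrite poweR_EFin powR1.
Qed.

Lemma Top_one_low (a u : R) : 0 < a -> itv a u ->
  mlow R tau cF mu a * a <= Top tau cF mu a (fun _ => 1) u.
Proof.
move=> a0 ua; rewrite /Top /Rintegral.
set J := (\int[leb]_(x in itv a) (kap a u x * 1)%:E)%E.
have ml := mlow0 a a0.
have J1 : ((a * mlow R tau cF mu a * a)%:E <= J)%E.
  rewrite -int_cst_itv // /J.
  apply: ge0_le_integral_nm.
    by move=> x xa; rewrite lee_fin; exact: (mulr_ge0 (ltW a0) (ltW ml)).
  move=> x xa.
  by rewrite mulr1 lee_fin; apply: klow => //; apply/itvP.
have J2 : (J <= (a * a)%:E)%E.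
  rewrite -int_cst_itv // /J; apply: ge0_le_integral_nm => x xa.
    by rewrite mulr1 lee_fin; exact: kge0.
  by rewrite mulr1 lee_fin; exact: kle.
have J0 : (0 <= J)%E.
  by apply: integral_ge0 => x _; rewrite mulr1 lee_fin; exact: kge0.
have Jfin : J \is a fin_num by rewrite ge0_fin_numE // (le_lt_trans J2) // ltry.
move: J1; rewrite -(fineK Jfin) lee_fin => J1.
have -> : mlow R tau cF mu a * a = a^-1 * (a * mlow R tau cF mu a * a).
  by field; rewrite gt_eqF.
by apply: ler_wpM2l => //; rewrite invr_ge0 ltW.
Qed.

Lemma opnorm_gt0 (a : R) : 0 < a -> (0 < opnorm tau cF mu a)%E.
Proof using tau1 cF0 mu0.
move=> a0.
have H : (L2norm a (Top tau cF mu a (fun _ => 1%R)) <= opnorm tau cF mu a)%E.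
  apply: le_ereal_sup_tmp; exists (L2norm a (Top tau cF mu a (fun _ => 1%R))) => //.
  by exists (fun _ => 1%R) => //; exact: ball_one.
apply: (lt_le_trans _ H).
apply: poweR_gt0; rewrite /Lam_int.
have ml := mlow0 a a0.
have I1 : (((mlow R tau cF mu a * a) ^+ 2 * a)%:E <=
    \int[leb]_(x in itv a) (Top tau cF mu a (fun _ => 1%R) x ^+ 2)%:E)%E.
  rewrite -int_cst_itv //; apply: ge0_le_integral_nm => x xa.
    by rewrite lee_fin sqr_ge0.
  rewrite lee_fin; have h := Top_one_low a x a0 xa.
  have p : 0 <= mlow R tau cF mu a * a by apply: mulr_ge0; apply: ltW.
  nra.
apply: (lt_le_trans _ (lee_wpmul2l _ I1)); last by rewrite lee_fin invr_ge0 ltW.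
rewrite -EFinM lte_fin; apply: mulr_gt0; first by rewrite invr_gt0.
by apply: mulr_gt0 => //; apply: exprn_gt0; apply: mulr_gt0.
Qed.

End pos.

Theorem lemma4p3 (R : realType) (tau cF mu : R) :
  2 < tau -> tau < 3 -> 0 < cF -> 0 < mu ->
  forall a b : R, 0 < a -> a <= b ->
    lambda_c tau cF mu b <= lambda_c tau cF mu a.
Proof.
move=> t2 t3 cF0 mu0 a b a0 ab.
have tau1 : 1 < tau by apply: lt_trans t2; rewrite ltr1n.
have b0 : 0 < b by exact: lt_le_trans ab.
have Na0 := @opnorm_gt0 R tau cF mu tau1 cF0 mu0 a a0.
have Nab : (opnorm tau cF mu a <= opnorm tau cF mu b)%E.
  apply: ge_ereal_sup => _ [f uf <-].
  have [g ug H] := @main_cmp R tau cF mu tau1 cF0 mu0 a b f a0 ab uf.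
  apply: (le_trans H); apply: le_ereal_sup_tmp.
  by exists (L2norm b (Top tau cF mu b g)) => //; exists g.
rewrite /lambda_c.
have [Nbinf|Nbfin] := eqVneq (opnorm tau cF mu b) +oo%E.
  by rewrite Nbinf /= invr0 invr_ge0 fine_ge0 // ltW.
have Nbf : opnorm tau cF mu b \is a fin_num.
  by rewrite ge0_fin_numE ?ltey // (le_trans (ltW Na0)).
have Naf : opnorm tau cF mu a \is a fin_num.
  by rewrite ge0_fin_numE ?(ltW Na0) // (le_lt_trans Nab) // ltey.
have fa : 0 < fine (opnorm tau cF mu a) by rewrite -lte_fin (fineK Naf).
rewrite lef_pV2 ?posrE //; last exact: lt_le_trans fa (fine_le Naf Nbf Nab).
exact: fine_le.
Qed.
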